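(* Let $\beta\in(0,1)$. Let $\mathcal R^{(\beta)}$ be a random closed subset of $[0,1]$ with capacity functional $\mathbb P(\mathcal R^{(\beta)}\cap K\neq\emptyset)=\mathrm{Leb}(K)^\beta$ for all compact $K\subset[0,1]$. Let $Q_\beta$ be an $\mathbb N$-valued random variable with \[ \mathbb P(Q_\beta=k)=\frac{\beta(1-\beta)_{(k-1)\uparrow}}{k!},\quad k\in\mathbb N, \] where $(a)_{n\uparrow}=a(a+1)\cdots(a+n-1)$ for $n\in\mathbb N$ and $(a)_{0\uparrow}=1$, and let $U_1,U_2,\dots$ be i.i.d. uniform on $(0,1)$, independent of $Q_\beta$. Then $\mathcal R^{(\beta)}\overset{d}{=}\bigcup_{i=1}^{Q_\beta}\{U_i\}$ as random closed sets of $[0,1]$.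
   Context: $\mathrm{Leb}$ is Lebesgue measure. Random closed sets are random elements of the space of closed subsets of $[0,1]$ with the Fell topology; their law is determined by the capacity functional $K\mapsto\mathbb P(R\cap K\ne\emptyset)$, $K$ compact. *)

(* Defs.v *)
From HB Require Import structures.
From mathcomp Require Import all_boot all_order all_algebra.
From mathcomp Require Import all_classical all_reals all_analysis.
Set Implicit Arguments. Unset Strict Implicit. Unset Printing Implicit Defensive.
Import Order.TTheory GRing.Theory Num.Theory.
Import numFieldNormedType.Exports.
Local Open Scope classical_set_scope.
Local Open Scope ring_scope.

Definition hitset (R : realType) (K : set R) : set (set R) :=
  [set F | F `&` K !=set0].

(* Effros sigma-algebra on closed subsets of [0,1]: generated by the hitting
   events of compact subsets of [0,1] (= Borel sigma-algebra of the Fell topology). *)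
Definition effros (R : realType) : set (set (set R)) :=
  <<s [set hitset K | K in [set K : set R | compact K /\ K `<=` `[0%R, 1%R]]] >>.

Definition random_closed_set d (T : measurableType d) (R : realType)
    (X : T -> set R) : Prop :=
  (forall w, closed (X w) /\ X w `<=` `[0%R, 1%R]) /\
  (forall A, effros A -> measurable (X @^-1` A)).

Definition rising (R : realType) (a : R) (n : nat) : R :=
  \prod_(j < n) (a + j%:R).

Definition indep_nat_seq d (T : measurableType d) (R : realType)
    (P : probability T R) (Q : T -> nat) (U : nat -> T -> R) : Prop :=
  forall (n : nat) (A : set nat) (B : nat -> set R),
    (forall i, measurable (B i)) ->
    P (Q @^-1` A `&` \bigcap_(i in `I_n) (U i @^-1` B i)) =
    (P (Q @^-1` A) * \prod_(i < n) P (U i @^-1` B i))%E.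

(* Main.v *)
Require Import Defs.
From HB Require Import structures.
From mathcomp Require Import all_boot all_order all_algebra.
From mathcomp Require Import all_classical all_reals all_analysis.
From mathcomp Require Import ring lra measurable_realfun.
Import Order.TTheory GRing.Theory Num.Theory.
Import numFieldNormedType.Exports.
Local Open Scope classical_set_scope.
Local Open Scope ring_scope.
Set Implicit Arguments. Unset Strict Implicit.
Section Bin.
Variable R : realType.
Variable be : R.
Hypothesis hbe : 0 < be < 1.

Definition bb (k : nat) : R := rising (1 - be) k / k`!%:R.

Lemma bb0 : bb 0 = 1.
Proof. by rewrite /bb /rising big_ord0 fact0 divr1. Qed.

Lemma bbS k : bb k.+1 = bb k * ((k.+1%:R - be) / k.+1%:R).
Proof.
rewrite /bb /rising big_ord_recr /= factS natrM.
have h1 : (k`!%:R : R) != 0 by rewrite pnatr_eq0 -lt0n fact_gt0.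
have h2 : (k.+1%:R : R) != 0 by rewrite pnatr_eq0.
rewrite -natr1; field.
by rewrite h1 /= -natr1 in h2 *; rewrite h2.
Qed.

Lemma bb_range k : 0 <= bb k <= 1.
Proof.
case/andP: hbe => b0 b1.
elim: k => [|k /andP[ih0 ih1]]; first by rewrite bb0 ler01 lexx.
have f0 : 0 <= (k.+1%:R - be) / k.+1%:R.
  apply: divr_ge0 => //; rewrite subr_ge0 (le_trans (ltW b1)) // ler1n //.
have f1 : (k.+1%:R - be) / k.+1%:R <= 1.
  by rewrite ler_pdivrMr ?ltr0Sn // mul1r lerBlDr lerDl ltW.
rewrite bbS mulr_ge0 //=.
by rewrite -[1]mulr1 ler_pM // mulr1.
Qed.

Definition aa (k : nat) : R := be * rising (1 - be) k.-1 / k`!%:R.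

Lemma aaS k : aa k.+1 = bb k - bb k.+1.
Proof.
rewrite bbS /aa /bb /= factS natrM.
have h1 : (k`!%:R : R) != 0 by rewrite pnatr_eq0 -lt0n fact_gt0.
have h2 : (k.+1%:R : R) != 0 by rewrite pnatr_eq0.
field. by rewrite h1 andbT addrC natr1.
Qed.

Lemma fac_le1 k : (k.+1%:R - be) / k.+1%:R <= 1.
Proof.
case/andP: hbe => b0 b1.
by rewrite ler_pdivrMr ?ltr0Sn // mul1r lerBlDr lerDl ltW.
Qed.

Lemma aa_ge0 k : 0 <= aa k.
Proof.
case: k => [|k].
  rewrite /aa /= /rising big_ord0 fact0 divr1 mulr1; case/andP: hbe => /ltW //.
have /andP[c0 c1] := bb_range k.
by rewrite aaS bbS subr_ge0 -{2}[bb k]mulr1 ler_wpM2l // fac_le1.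
Qed.

Definition gg (k : nat) : R := if k is k'.+1 then bb k - bb k' else 1.

Lemma diffs_gg : pseries_diffs gg = (fun k => - be * bb k).
Proof.
apply/funext => k; rewrite /pseries_diffs /= bbS.
have h2 : (k.+1%:R : R) != 0 by rewrite pnatr_eq0.
field. done.
Qed.

Lemma diffs2_gg k : `|pseries_diffs (pseries_diffs gg) k| <= k.+1%:R.
Proof.
rewrite diffs_gg /pseries_diffs normrM ger0_norm // -{2}[k.+1%:R]mulr1 ler_wpM2l //.
case/andP: hbe => b0 b1; have /andP[c0 c1] := bb_range k.+1.
rewrite normrM normrN (ger0_norm (ltW b0)) (ger0_norm c0); nra.
Qed.

Lemma gg_le k : `|gg k| <= 1.
Proof.
case: k => [|k] /=; first by rewrite normr1.
have /andP[c0 c1] := bb_range k.+1; have /andP[d0 d1] := bb_range k.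
rewrite ler_norml; apply/andP; split; lra.
Qed.

Lemma diffs_gg_le k : `|pseries_diffs gg k| <= 1.
Proof.
rewrite diffs_gg normrM normrN.
case/andP: hbe => b0 b1; have /andP[c0 c1] := bb_range k.
rewrite (ger0_norm (ltW b0)) (ger0_norm c0); nra.
Qed.

End Bin.

Section Conv.
Variable R : realType.

Lemma sum_lin_geo (y : R) n :
  (1 - y) ^+ 2 * \sum_(0 <= k < n) k.+1%:R * y ^+ k =
  1 - n.+1%:R * y ^+ n + n%:R * y ^+ n.+1.
Proof.
elim: n => [|n ih]; first by rewrite big_nil mulr0 expr0 mulr1 mul0r addr0 subrr.
rewrite big_nat_recr //= mulrDr ih !exprS -!natr1; ring.
Qed.

Lemma cvg_lin_geo (y : R) : 0 <= y < 1 ->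
  cvgn (series (fun k => k.+1%:R * y ^+ k)).
Proof.
case/andP=> y0 y1.
apply: nondecreasing_is_cvgn.
  by apply: nondecreasing_series => n _ _; rewrite mulr_ge0 // exprn_ge0.
exists ((1 - y) ^- 2) => _ [n _ <-] /=.
have h : 0 < (1 - y) ^+ 2 by rewrite exprn_gt0 // subr_gt0.
rewrite /series /= -(ler_pM2l h) mulrV ?unitfE ?gt_eqF // sum_lin_geo.
have : 0 <= n%:R * y ^+ n * (1 - y) + y ^+ n.
  by rewrite addr_ge0 ?exprn_ge0 // mulr_ge0 ?mulr_ge0 ?exprn_ge0 // subr_ge0 ltW.
rewrite exprS -natr1; nra.
Qed.

Lemma cvg_pseries_lin (c : R^nat) (x : R) : `|x| < 1 ->
  (forall k, `|c k| <= k.+1%:R) -> cvgn (pseries c x).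
Proof.
move=> x1 hc; apply: normed_cvg.
apply: (@series_le_cvg _ _ (fun k => k.+1%:R * `|x| ^+ k)).
- by move=> n /=.
- by move=> n; rewrite mulr_ge0 // exprn_ge0.
- by move=> n /=; rewrite normrM normrX ler_wpM2r // exprn_ge0.
- by apply: cvg_lin_geo; rewrite x1 andbT.
Qed.

End Conv.

Section Bin2.
Variable R : realType.
Variable be : R.
Hypothesis hbe : 0 < be < 1.

Let gg := gg be.
Let bb := bb be.

Definition Gf (x : R) := limn (pseries gg x).
Definition Tf (x : R) := limn (pseries bb x).

Lemma cvg_gg (x : R) : `|x| < 1 -> cvgn (pseries gg x).
Proof.
move=> x1; apply: cvg_pseries_lin => // k.
by rewrite (le_trans (gg_le hbe k)) // ler1n.
Qed.

Lemma cvg_bb (x : R) : `|x| < 1 -> cvgn (pseries bb x).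
Proof.
move=> x1; apply: cvg_pseries_lin => // k.
have /andP[c0 c1] := bb_range hbe k.
by rewrite ger0_norm // (le_trans c1) // ler1n.
Qed.

Lemma derive_Gf (x : R) : `|x| < 1 -> is_derive x 1 Gf (- be * Tf x).
Proof.
move=> x1.
pose K := (1 + `|x|) / 2.
have K0 : 0 <= K by rewrite divr_ge0 // addr_ge0.
have K1 : `|K| < 1 by rewrite ger0_norm // ltr_pdivrMr //; lra.
have xK : `|x| < `|K| by rewrite (ger0_norm K0) ltr_pdivlMr //; lra.
have := @pseries_snd_diffs R gg K x (cvg_gg K1) _ _ xK.
have h1 : cvgn (pseries (pseries_diffs gg) K).
  apply: cvg_pseries_lin => // k.
  by rewrite (le_trans (diffs_gg_le hbe k)) // ler1n.
have h2 : cvgn (pseries (pseries_diffs (pseries_diffs gg)) K).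
  by apply: cvg_pseries_lin => // k; exact: diffs2_gg.
move=> /(_ h1 h2) hd; apply: is_derive_eq hd _.
have -> : pseries (pseries_diffs gg) x =
   series ((- be) *: (fun i => bb i * x ^+ i)).
  apply/funext => n; rewrite /pseries /gg diffs_gg /series /=.
  by apply: eq_bigr => i _; rewrite -mulrA.
by rewrite lim_seriesZ //; exact: cvg_bb.
Qed.


Lemma partial_GT (x : R) n :
  series (fun k => gg k * x ^+ k) n.+1 =
  (1 - x) * series (fun k => bb k * x ^+ k) n.+1 + bb n * x ^+ n.+1.
Proof.
elim: n => [|n ih].
  rewrite /series /= big_nat1 big_nat1 /gg /= expr0 !mulr1 /bb bb0; ring.
rewrite /series /= in ih *; rewrite big_nat_recr //= ih [in RHS]big_nat_recr //= /bb.
rewrite !exprS; ring.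
Qed.

Lemma Gf_Tf (x : R) : `|x| < 1 -> Gf x = (1 - x) * Tf x.
Proof.
move=> x1.
have e1 : [sequence series (fun k => gg k * x ^+ k) n.+1]_n @ \oo --> Gf x.
  by rewrite cvg_shiftS; exact: (cvg_gg x1).
have e3 : [sequence bb n * x ^+ n.+1]_n @ \oo --> (0 : R).
  apply: (@squeeze_cvgr _ _ _ _ (fun n => - `|x| ^+ n.+1) (fun n => `|x| ^+ n.+1)).
  - apply: filterE => n /=.
    have /andP[c0 c1] := bb_range hbe n.
    have : `|bb n * x ^+ n.+1| <= `|x| ^+ n.+1.
      by rewrite normrM normrX (ger0_norm c0) ler_piMl // exprn_ge0.
    by rewrite ler_norml.
  - rewrite -oppr0; apply: cvgN.
    by rewrite (cvg_shiftS (GRing.exp `|x|)); apply: cvg_expr; rewrite normr_id.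
  - by rewrite (cvg_shiftS (GRing.exp `|x|)); apply: cvg_expr; rewrite normr_id.
have e2 : [sequence (1 - x) * series (fun k => bb k * x ^+ k) n.+1 + bb n * x ^+ n.+1]_n
    @ \oo --> (1 - x) * Tf x + 0.
  apply: cvgD => //; apply: cvgMr.
  by rewrite cvg_shiftS; exact: (cvg_bb x1).
have ee : [sequence series (fun k => gg k * x ^+ k) n.+1]_n =
  [sequence (1 - x) * series (fun k => bb k * x ^+ k) n.+1 + bb n * x ^+ n.+1]_n.
  by apply/funext => n /=; rewrite partial_GT.
rewrite ee in e1.
by rewrite -(addr0 (_ * _)); apply: (cvg_unique _ e1 e2).
Qed.


Lemma Gf0 : Gf 0 = 1.
Proof.
apply: cvg_lim => //; rewrite -cvg_shiftS.
have -> : [sequence pseries gg 0 n.+1]_n = cst 1.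
  apply/funext => n /=; rewrite /pseries /series /= big_nat_recl //= expr0 mulr1.
  rewrite big1 ?addr0 // => i _; rewrite expr0n /= mulr0 //.
exact: cvg_cst.
Qed.

Definition pw (y : R) := (1 - y) `^ (- be).

Lemma derive_pw (y : R) : y < 1 ->
  is_derive y 1 pw (- be * (1 - y) `^ (- be - 1) * -1).
Proof.
move=> y1.
have hy : 0 < 1 - y by rewrite subr_gt0.
have := @is_derive1_comp R (fun z : R => z `^ (- be)) (fun y => 1 - y) y
  (- be * (1 - y) `^ (- be - 1)) (-1) (@is_derive1_powR R (- be) (1 - y) hy) _.
apply.
have -> : -1 = (0 : R) - 1 by rewrite sub0r.
apply: is_deriveB.
Qed.

Definition hf := Gf * pw.

Lemma derive_hf (y : R) : `|y| < 1 -> is_derive y 1 hf 0.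
Proof.
move=> y1.
have yl1 : y < 1 by rewrite (le_lt_trans (ler_norm y)).
have hy : 0 < 1 - y by rewrite subr_gt0.
apply: is_derive_eq; first exact: (is_deriveM (derive_Gf y1) (derive_pw yl1)).
rewrite Gf_Tf // /pw.
have e : (1 - y) `^ (- be) = (1 - y) `^ (- be - 1) * (1 - y).
  rewrite -[X in _ * X](powRr1 (ltW hy)) -powRD ?subrK //.
  by apply/implyP => _; rewrite gt_eqF.
rewrite e /GRing.scale /=; ring.
Qed.

Lemma Gf_pow (y : R) : 0 <= y < 1 -> Gf y = (1 - y) `^ be.
Proof.
case/andP=> y0 y1.
have hy : 0 < 1 - y by rewrite subr_gt0.
suff : hf y = 1.
  change (Gf y * (1 - y) `^ (- be) = 1 -> Gf y = (1 - y) `^ be).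
  have hp : (1 - y) `^ be != 0 by rewrite gt_eqF // powR_gt0.
  by rewrite powRN => h; rewrite -[Gf y](divfK hp) h mul1r.
have -> : 1 = hf 0.
  by change (1 = Gf 0 * (1 - 0) `^ (- be)); rewrite Gf0 subr0 powR1 mulr1.
move: y0; rewrite le_eqVlt => /orP[/eqP <- // | y0'].
have hd : forall x, x \in `]0, y[ -> is_derive x 1 hf 0.
  move=> x /[!in_itv] /andP[x0 xy] /=; apply: derive_hf.
  by rewrite ger0_norm ?ltW // (lt_trans xy).
have hc : {within `[0, y], continuous hf}.
  apply: derivable_within_continuous => x /[!in_itv] /andP[x0 xy] /=.
  have : `|x| < 1 by rewrite ger0_norm // (le_lt_trans xy).
  by move/derive_hf => [].
have [c _] := MVT y0' hd hc.
by move=> /eqP; rewrite mul0r subr_eq0 => /eqP.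
Qed.


Definition ap (k : nat) : R := if k is k'.+1 then aa be k else 0.

Lemma ap_ge0 k : 0 <= ap k.
Proof. by case: k => // k; exact: aa_ge0. Qed.

Lemma ap_gg k : ap k = (k == 0%N)%:R - gg k.
Proof.
case: k => [|k]; first by rewrite /= subrr.
by rewrite /ap aaS /gg /= sub0r opprB.
Qed.

Lemma series_ap (y : R) n :
  series (fun k => ap k * y ^+ k) n.+1 = 1 - series (fun k => gg k * y ^+ k) n.+1.
Proof.
rewrite /series /= -[1](_ : \sum_(0 <= k < n.+1) (k == 0%N)%:R * y ^+ k = 1).
  rewrite -sumrB; apply: eq_bigr => k _; rewrite ap_gg; ring.
rewrite big_nat_recl //= expr0 mulr1 big1 ?addr0 // => i _; rewrite mul0r //.
Qed.

Lemma cvg_ap (y : R) : 0 <= y < 1 ->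
  series (fun k => ap k * y ^+ k) @ \oo --> 1 - (1 - y) `^ be.
Proof.
case/andP=> y0 y1.
have y1' : `|y| < 1 by rewrite ger0_norm.
rewrite -cvg_shiftS -Gf_pow ?y0 //.
have -> : [sequence series (fun k => ap k * y ^+ k) n.+1]_n =
  (fun n => 1 - series (fun k => gg k * y ^+ k) n.+1).
  by apply/funext => n /=; rewrite series_ap.
apply: cvgB; first exact: cvg_cst.
by rewrite (cvg_shiftS (series (fun k => gg k * y ^+ k))); exact: cvg_gg.
Qed.

Lemma series_ap1_le n : series ap n <= 1.
Proof.
case: n => [|n]; first by rewrite /series /= big_nil ler01.
have := series_ap 1 n; rewrite partial_GT.
have -> : series (fun k => ap k * 1 ^+ k) n.+1 = series ap n.+1.
  by rewrite /series /=; apply: eq_bigr => k _; rewrite expr1n mulr1.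
move=> ->; have /andP[c0 _] := bb_range hbe n.
by rewrite subrr mul0r add0r expr1n mulr1 gerBl.
Qed.

Lemma cvg_ap1 : cvgn (series ap).
Proof.
apply: nondecreasing_is_cvgn.
  by apply: nondecreasing_series => n _ _; exact: ap_ge0.
by exists 1 => _ [n _ <-]; exact: series_ap1_le.
Qed.

Lemma lim_ap1 : limn (series ap) = 1.
Proof.
apply/le_anti/andP; split.
  by apply: limr_le; [exact: cvg_ap1 | apply: filterE => n; exact: series_ap1_le].
apply/ler_addgt0Pr => e e0.
case: (leP 1 e) => e1.
  rewrite -lerBlDr (le_trans (_ : _ <= 0)) ?subr_le0 //.
  by apply: limr_ge; [exact: cvg_ap1 | apply: filterE => n; apply: sumr_ge0 => k _; exact: ap_ge0].
pose y := 1 - e `^ (be^-1).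
have he : 0 < e `^ (be^-1) by rewrite powR_gt0.
have he1 : e `^ (be^-1) <= 1.
  case/andP: hbe => b0 b1.
  rewrite -(powRr0 e); apply: ger_powR; first by rewrite e0 ltW.
  by rewrite invr_ge0 ltW.
have hy : 0 <= y < 1.
  by apply/andP; split; rewrite /y ?subr_ge0 // ltrBlDr ltrDl.
have := cvg_ap hy; rewrite /y subKr -powRrM mulVf ?gt_eqF //; last by case/andP: hbe.
rewrite (powRr1 (ltW e0)) => hc.
rewrite -lerBlDr -(cvg_lim _ hc) //.
apply: ler_lim; [exact: cvgP hc | exact: cvg_ap1 |].
apply: filterE => n; apply: ler_sum => k _.
case/andP: hy => hy0 hy1.
by rewrite ler_piMr ?ap_ge0 // exprn_ile1 // ltW.
Qed.


Lemma eseries_EFin (u : R^nat) (l : R) : series u @ \oo --> l ->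
  (\sum_(k <oo) (u k)%:E = l%:E)%E.
Proof.
move=> hu.
have -> : (fun n => (\sum_(0 <= k < n) (u k)%:E)%E) = EFin \o series u.
  by apply/funext => n /=; rewrite sumEFin.
by rewrite EFin_lim ?(cvg_lim _ hu) //; exact: cvgP hu.
Qed.

Lemma ap_eseries (y : R) : 0 <= y <= 1 ->
  (\sum_(k <oo) ((ap k * y ^+ k)%:E) = (1 - (1 - y) `^ be)%:E)%E.
Proof.
case/andP=> y0; rewrite le_eqVlt => /orP[/eqP -> | y1].
  have bn0 : be != 0 by case/andP: hbe => b0 _; rewrite gt_eqF.
  rewrite subrr (powR0 bn0) subr0.
  apply: (@eseries_EFin (fun k => ap k * 1 ^+ k)).
  have -> : (fun k => ap k * 1 ^+ k) = ap by apply/funext => k; rewrite expr1n mulr1.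
  by rewrite -lim_ap1; exact: cvg_ap1.
by apply: (@eseries_EFin (fun k => ap k * y ^+ k)); apply: cvg_ap; rewrite y0.
Qed.


Lemma ap_sum1 : (\sum_(k <oo) (ap k)%:E = 1%:E)%E.
Proof.
have bn0 : be != 0 by case/andP: hbe => b0 _; rewrite gt_eqF.
have := @ap_eseries 1; rewrite ler01 lexx subrr (powR0 bn0) subr0 => <- //.
congr (limn _); apply/funext => n; apply: eq_bigr => k _.
by rewrite expr1n mulr1.
Qed.

End Bin2.

Section LebK.
Variable R : realType.
Local Notation mu := (@lebesgue_measure R).

Lemma leb_oo : mu `]0, 1[ = 1%E.
Proof. by rewrite lebesgue_measure_itv /= lte_fin ltr01 oppr0 adde0. Qed.

Lemma leb_cc : mu `[0, 1] = 1%E.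
Proof. by rewrite lebesgue_measure_itv /= lte_fin ltr01 oppr0 adde0. Qed.

Lemma leb_K (K : set R) : measurable K -> K `<=` `[0, 1] ->
  mu K = (fine (mu K))%:E /\ 0 <= fine (mu K) <= 1.
Proof.
move=> mK KJ.
have h1 : (mu K <= 1)%E by rewrite -leb_cc le_measure // inE.
have h0 : (0 <= mu K)%E by exact: measure_ge0.
have fK : mu K \is a fin_num by rewrite ge0_fin_numE // (le_lt_trans h1) // ltry.
split; first by rewrite fineK.
by rewrite -!lee_fin !fineK // h0.
Qed.

Lemma leb_IK (K : set R) : measurable K -> K `<=` `[0, 1] ->
  mu (`]0, 1[ `&` K) = mu K.
Proof.
move=> mK KJ.
set I := [set` `]0, (1 : R)[]; set J := [set` `[0, (1 : R)]].
have mI : measurable I by exact: measurable_itv.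
have mJ : measurable J by exact: measurable_itv.
have lJ : mu J = 1%E by exact: leb_cc.
have lI : mu I = 1%E by exact: leb_oo.
have IJ : I `<=` J by apply: subset_itv_oo_cc.
have hJI : mu (J `\` I) = 0%E.
  rewrite measureD //; last by suff : (mu J < +oo)%E by []; rewrite lJ ltry.
  rewrite setIidr //; transitivity (mu J - mu I)%E; first by [].
  by rewrite lJ lI subee.
have hKI : mu (K `\` I) = 0%E.
  apply/eqP; rewrite eq_le measure_ge0 andbT -hJI le_measure // ?inE //.
  - exact: measurableD.
  - exact: measurableD.
  - by move=> x [/KJ Jx nIx]; split.
rewrite -[in RHS](setUIDK K I) measureU //.
- symmetry; transitivity (mu (K `&` I) + mu (K `\` I))%E; first by [].
  by rewrite hKI adde0 setIC.
- exact: measurableI.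
- exact: measurableD.
- by apply/seteqP; split => x // [[_ Ix] [_ nIx]].
Qed.

Lemma leb_CK (K : set R) : measurable K -> K `<=` `[0, 1] ->
  mu (~` K `&` `]0, 1[) = (1 - fine (mu K))%:E.
Proof.
move=> mK KJ.
have [fK _] := leb_K mK KJ.
rewrite setIC -setDE measureD //; last first.
  by suff : (mu `]0%R, 1%R[ < +oo)%E by []; rewrite leb_oo ltry.
transitivity (mu `]0%R, 1%R[ - mu (`]0%R, 1%R[ `&` K))%E; first by [].
by rewrite leb_IK // leb_oo fK.
Qed.

End LebK.

Unset Implicit Arguments. Set Strict Implicit.

Theorem lemma3p1 (R : realType) (beta : R) (hbeta : 0 < beta < 1)
  (d1 : measure_display) (T1 : measurableType d1) (P1 : probability T1 R)
  (Rb : T1 -> set R) (hRb : random_closed_set Rb)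
  (hcap : forall K : set R, compact K -> K `<=` `[0, 1] ->
     P1 [set w | Rb w `&` K !=set0] = ((fine (lebesgue_measure K)) `^ beta)%:E)
  (d2 : measure_display) (T2 : measurableType d2) (P2 : probability T2 R)
  (Q : T2 -> nat) (hQm : measurable_fun setT Q)
  (hQ : forall k : nat, (0 < k)%N ->
     P2 (Q @^-1` [set k]) = (beta * rising (1 - beta) k.-1 / k`!%:R)%:E)
  (U : nat -> T2 -> R) (hUm : forall i, measurable_fun setT (U i))
  (hU : forall i (B : set R), measurable B ->
     P2 (U i @^-1` B) = lebesgue_measure (B `&` `]0, 1[))
  (hind : indep_nat_seq P2 Q U) :
  let X := fun w : T2 => [set x | exists2 i : nat, (i < Q w)%N & U i w = x] in
  (forall A, effros A -> measurable (X @^-1` A)) /\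
  (forall A, effros A -> P1 (Rb @^-1` A) = P2 (X @^-1` A)).
Proof.
move=> X.
have mQ : forall S : set nat, measurable (Q @^-1` S).
  by move=> S; have := hQm measurableT S I; rewrite setTI.
have mU : forall i (B : set R), measurable B -> measurable (U i @^-1` B).
  by move=> i B mB; have := hUm i measurableT B mB; rewrite setTI.
have hitX : forall K : set R, measurable K -> measurable (X @^-1` hitset K).
  move=> K mK.
  have -> : X @^-1` hitset K =
      \bigcup_i (Q @^-1` [set n | (i < n)%N] `&` U i @^-1` K).
    apply/seteqP; split => w /=.
    - by case=> x [[i iQ <-] Kx]; exists i.
    - by case=> i _ [iQ KU]; exists (U i w); split => //; exists i.
  apply: (@bigcupT_measurable _ T2 (fun i => Q @^-1` [set n | (i < n)%N] `&` U i @^-1` K)) => i.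
  by apply: measurableI; [exact: mQ | exact: mU].
have Xmeas : forall A, effros A -> measurable (X @^-1` A).
  move=> A hA; apply: (@smallest_sub _ (sigma_algebra setT) _ [set B | measurable (X @^-1` B)] _ _ A hA).
  - split.
    + rewrite /= (_ : X @^-1` set0 = set0) //; apply/seteqP; split => w //.
    + move=> B hB /=; rewrite (_ : X @^-1` _ = setT `\` X @^-1` B) //.
      exact: measurableD.
    + move=> F hF /=; rewrite (_ : X @^-1` _ = \bigcup_k (X @^-1` F k)) //.
      exact: (@bigcupT_measurable _ T2 (fun k => X @^-1` F k)).
  - move=> _ [K [cK KI] <-] /=; apply: hitX; exact: compact_measurable.
split => //.
have decomp : forall K : set R, measurable K ->
  P2 (X @^-1` (~` hitset K)) =
  (\sum_(k <oo) (P2 (Q @^-1` [set k]) * \prod_(i < k) P2 (U i @^-1` (~` K))))%E.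
  move=> K mK.
  pose F := fun k => Q @^-1` [set k] `&` \bigcap_(i in `I_k) (U i @^-1` (~` K)).
  have mF : forall k, measurable (F k).
    move=> k; apply: measurableI; first exact: mQ.
    by apply: bigcap_measurableType => i _; apply: mU; exact: measurableC.
  have -> : X @^-1` (~` hitset K) = \bigcup_k F k.
    apply/seteqP; split => w /=.
    - move=> h; exists (Q w) => //; split => // i /= iQ KU.
      by apply: h; exists (U i w); split => //; exists i.
    - case=> k _ [/= Qk hk] [x [[i iQ <-] Kx]].
      by apply: (hk i _ Kx); rewrite /= -Qk.
  rewrite measure_semi_bigcup //.
  - congr (limn _); apply/funext => n; apply: eq_bigr => k _.
    exact: (hind k [set k] (fun _ => ~` K) (fun _ => measurableC mK)).
  - by move=> i j _ _ [w [[/= Qi _] [/= Qj _]]]; rewrite -Qi -Qj.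
  - exact: (@bigcupT_measurable _ T2 F).
have prodU : forall K : set R, measurable K -> K `<=` `[0, 1] -> forall k,
    (\prod_(i < k) P2 (U i @^-1` (~` K)) =
     ((1 - fine (lebesgue_measure K)) ^+ k)%:E)%E.
  move=> K mK KJ; elim => [|k ih]; first by rewrite big_ord0 expr0.
  by rewrite big_ord_recr /= ih hU ?leb_CK //; [rewrite exprSr EFinM | exact: measurableC].
have pQ0 : P2 (Q @^-1` [set 0%N]) = 0%E.
  have := decomp set0 measurable0.
  have -> : X @^-1` (~` hitset set0) = setT.
    by apply/seteqP; split => // w _ /= [x [_ []]].
  rewrite probability_setT.
  have -> : (fun n => \sum_(0 <= k < n)
      (P2 (Q @^-1` [set k]) * \prod_(i < k) P2 (U i @^-1` (~` set0))))%E =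
      (fun n => \sum_(0 <= k < n) P2 (Q @^-1` [set k]))%E.
    apply/funext => n; apply: eq_bigr => k _.
    rewrite big1 ?mule1 // => i _.
    by rewrite setC0 preimage_setT probability_setT.
  rewrite nneseries_recl // (_ : (\sum_(1 <= k <oo) P2 (Q @^-1` [set k]))%E = 1%E).
    move=> h; have : (P2 (Q @^-1` [set 0%N]) + 1 - 1 = 1 - 1)%E by rewrite -h.
    by rewrite addeK // subee.
  rewrite -(ap_sum1 hbeta) (nneseries_recl (f := fun k => (ap beta k)%:E)) //; last first.
    by move=> k _; rewrite lee_fin ap_ge0.
  rewrite /= add0e; congr (limn _); apply/funext => n.
  apply: eq_big_nat => k /andP[k1 _].
  by rewrite hQ //; case: k k1.
have pQ : forall k, P2 (Q @^-1` [set k]) = (ap beta k)%:E.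
  by case=> [|k] //; rewrite hQ.
have miss : forall K : set R, compact K -> K `<=` `[0, 1] ->
    P2 (X @^-1` (~` hitset K)) = (1 - fine (lebesgue_measure K) `^ beta)%:E.
  move=> K cK KJ; have mK := compact_measurable cK.
  have [_ /andP[L0 L1]] := leb_K mK KJ.
  set L := fine (lebesgue_measure K) in L0 L1 *.
  rewrite decomp //.
  have -> : (1 - L `^ beta) = 1 - (1 - (1 - L)) `^ beta by congr (_ - _ `^ _); ring.
  rewrite -(ap_eseries hbeta); last by apply/andP; split; lra.
  congr (limn _); apply/funext => n; apply: eq_bigr => k _.
  by rewrite pQ prodU // -EFinM.
have [_ mRb] := hRb.
pose Mc := [set K : set R | compact K /\ K `<=` `[0, 1]].
pose Gm := [set ~` hitset K | K in Mc].
have effS : sigma_algebra setT (@effros R) by exact: smallest_sigma_algebra.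
have [eff0 effC effU] := effS.
have effT : @effros R setT by have := effC set0 eff0; rewrite setD0.
have effG : forall K, Mc K -> effros (hitset K).
  by move=> K MK; apply: sub_sigma_algebra; exists K.
have eff_sub : @effros R `<=` <<s Gm>>.
  apply: smallest_sub; first exact: smallest_sigma_algebra.
  move=> _ [K MK <-].
  have hG : <<s Gm>> (~` hitset K) by apply: sub_sigma_algebra; exists K.
  have [_ hC _] := @smallest_sigma_algebra _ setT Gm.
  by rewrite -[hitset K]setCK -setTD; exact: hC.
have GmI : setI_closed Gm.
  move=> _ _ [K1 [c1 s1] <-] [K2 [c2 s2] <-]; exists (K1 `|` K2).
    by split; [exact: compactU | move=> x [/s1|/s2]].
  apply/seteqP; split => F /=.
  - move=> h; split => -[x [Fx Kx]]; apply: h; exists x; split => //; [left|right] => //.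
  - by case=> h1 h2 [x [Fx [K1x|K2x]]]; [apply: h1 | apply: h2]; exists x.
pose D := [set A | effros A /\ P1 (Rb @^-1` A) = P2 (X @^-1` A)].
have Dd : dynkin D.
  split.
  - split => //; rewrite !preimage_setT !probability_setT //.
  - move=> A [eA hA]; split; first by rewrite -setTD; exact: effC.
    rewrite -!preimage_setC !probability_setC ?hA //; [exact: Xmeas | exact: mRb].
  - move=> F tF hF; split; first by apply: effU => n; case: (hF n).
    rewrite !preimage_bigcup !measure_semi_bigcup //.
    + congr (limn _); apply/funext => n; apply: eq_bigr => k _; by case: (hF k).
    + by move=> n; apply: Xmeas; case: (hF n).
    + by move=> i j _ _ [w [h1 h2]]; apply: tF => //; exists (X w).
    + by apply: bigcupT_measurable => n; apply: Xmeas; case: (hF n).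
    + by move=> n; apply: mRb; case: (hF n).
    + by move=> i j _ _ [w [h1 h2]]; apply: tF => //; exists (Rb w).
    + by apply: bigcupT_measurable => n; apply: mRb; case: (hF n).
have GmD : Gm `<=` D.
  move=> _ [K [cK KJ] <-]; split.
    by rewrite -setTD; apply: effC; apply: effG.
  rewrite miss // -preimage_setC probability_setC; last first.
    by apply: mRb; apply: effG.
  by rewrite hcap // EFinB.
move=> A /eff_sub; rewrite -setI_closed_g_dynkin_g_sigma_algebra //.
by move=> hA; have [] := smallest_sub Dd GmD hA.
Qed.
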